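(* For disjunctive guarded systems of type $(A,B)$ and every LTL formula without the next operator $h(A,B_1)$: for all $n>2|B|$, if $(A,B)^{(1,n)}\models\mathsf E_{uncond}\,h(A,B_1)$ then $(A,B)^{(1,2|B|)}\models\mathsf E_{uncond}\,h(A,B_1)$.
   Context: A process template is $U=(Q_U,\mathit{init}_U,\Sigma_U,\delta_U)$ with finite states $Q_U$, initial state $\mathit{init}_U$, finite input alphabet $\Sigma_U$ and guarded transitions $\delta_U\subseteq Q_U\times\Sigma_U\times 2^{Q_A\cup Q_B}\times Q_U$; templates $A,B$ have disjoint state sets and disjoint alphabets, and $|B|=|Q_B|$. The system $(A,B)^{(1,n)}$ consists of one copy of $A$ and $n$ copies $B_1,\dots,B_n$ of $B$; a global state $s$ gives each process a local state, a global input $e$ gives each process an input letter, and initially all processes are in their initial states. In a disjunctive system a guard $g$ is satisfied for process $p$ in $s$ iff some process $p'\ne p$ has $s(p')\in g$. A local transition $(q,\sigma,g,q')$ of $p$ is enabled for $(s,e)$ if $s(p)=q$, $e(p)=\sigma$ and $g$ is satisfied for $p$ in $s$; a global step changes the state of exactly one process along an enabled transition. A path is a sequence of configurations $(s_1,e_1,p_1),(s_2,e_2,p_2),\dots$ where $p_t$ makes the step from $s_t$ to $s_{t+1}$ under $e_t$, a configuration $(s,e,\bot)$ occurs (as the last one) exactly when all processes are disabled, and $e_{t+1}(p)=e_t(p)$ for every process $p$ not moving at moment $t$. A run is a maximal path from the initial state. A run is unconditionally fair if it is infinite and every process moves infinitely often. For an LTL formula $h(A,B_1)$ without next operator over atomic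 propositions from $Q_A\cup\Sigma_A$ and $(Q_B\cup\Sigma_B)\times\{1\}$ (interpreted on the local states and inputs of $A$ and $B_1$), $(A,B)^{(1,n)}\models\mathsf E_{uncond}\,h(A,B_1)$ means some unconditionally fair run satisfies $h$. *)

(* Defs.v *)
From mathcomp Require Import all_boot.

Set Implicit Arguments.
Unset Strict Implicit.
Unset Printing Implicit Defensive.

(* The state sets Q_A, Q_B are finite types QA, QB; they are disjoint  *)
(* by construction since the union Q_A \cup Q_B is the sum QA + QB.    *)
Record template (QA QB : finType) (Q S : finType) := Template {
  t_init  : Q;
  t_delta : {set Q * S * {set (QA + QB)} * Q}
}.

Section System.
Variables (QA QB SA SB : finType).
Variables (A : template QA QB QA SA) (B : template QA QB QB SB).
Variable n : nat.

(* System (A,B)^(1,n): process None is the copy of A,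
   process Some i (i : 'I_n) is B_{i+1}. *)
Definition proc := option 'I_n.

Definition gstate := (QA * ('I_n -> QB))%type.
Definition ginput := (SA * ('I_n -> SB))%type.

Definition lstate (s : gstate) (p : proc) : QA + QB :=
  match p with None => inl s.1 | Some i => inr (s.2 i) end.
Definition linput (e : ginput) (p : proc) : SA + SB :=
  match p with None => inl e.1 | Some i => inr (e.2 i) end.

Definition guard_sat (s : gstate) (p : proc) (g : {set (QA + QB)}) : Prop :=
  exists p' : proc, p' <> p /\ lstate s p' \in g.

Definition step (s : gstate) (e : ginput) (p : proc) (s' : gstate) : Prop :=
  match p with
  | None => exists g q',
      (s.1, e.1, g, q') \in t_delta A /\ guard_sat s None g /\
      s'.1 = q' /\ (forall j, s'.2 j = s.2 j)
  | Some i => exists g q',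
      (s.2 i, e.2 i, g, q') \in t_delta B /\ guard_sat s (Some i) g /\
      s'.1 = s.1 /\ (forall j, s'.2 j = if j == i then q' else s.2 j)
  end.

(* configurations (s, e, p) of an infinite path; the "bottom" process
   only occurs in the last configuration of finite paths, which are
   irrelevant for unconditionally fair runs (these are infinite). *)
Definition config := (gstate * ginput * proc)%type.

Definition cs (c : config) : gstate := c.1.1.
Definition ce (c : config) : ginput := c.1.2.
Definition cp (c : config) : proc := c.2.

Definition is_initial (s : gstate) : Prop :=
  s.1 = t_init A /\ forall i, s.2 i = t_init B.

(* an infinite path starting in the initial state; an infinite path is
   automatically maximal, hence an (infinite) run *)
Definition infinite_run (r : nat -> config) : Prop :=
  is_initial (cs (r 0)) /\
  (forall t, step (cs (r t)) (ce (r t)) (cp (r t)) (cs (r t.+1))) /\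
  (forall t (p : proc), p <> cp (r t) ->
      linput (ce (r t.+1)) p = linput (ce (r t)) p).

Definition uncond_fair_run (r : nat -> config) : Prop :=
  infinite_run r /\ forall (p : proc) (t : nat), exists t', t <= t' /\ cp (r t') = p.

End System.

Inductive atom (QA SA QB SB : Type) :=
| AtA_state of QA
| AtA_input of SA
| AtB1_state of QB
| AtB1_input of SB.

Inductive ltlx (QA SA QB SB : Type) :=
| LTrue
| LAtom of atom QA SA QB SB
| LNot of ltlx QA SA QB SB
| LAnd of ltlx QA SA QB SB & ltlx QA SA QB SB
| LUntil of ltlx QA SA QB SB & ltlx QA SA QB SB.

Section Semantics.
Variables (QA QB SA SB : finType) (n : nat).

(* atomic propositions are interpreted on the local states and inputs of
   A and of B_1 (the B-process with index 0) *)
Definition atom_holds (c : config QA QB SA SB n) (a : atom QA SA QB SB) : Prop :=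
  match a with
  | AtA_state q => (cs c).1 = q
  | AtA_input x => (ce c).1 = x
  | AtB1_state q => exists i : 'I_n, val i = 0 /\ (cs c).2 i = q
  | AtB1_input x => exists i : 'I_n, val i = 0 /\ (ce c).2 i = x
  end.

Fixpoint ltl_sat (r : nat -> config QA QB SA SB n) (t : nat)
    (f : ltlx QA SA QB SB) : Prop :=
  match f with
  | LTrue => True
  | LAtom a => atom_holds (r t) a
  | LNot f1 => ~ ltl_sat r t f1
  | LAnd f1 f2 => ltl_sat r t f1 /\ ltl_sat r t f2
  | LUntil f1 f2 => exists t', t <= t' /\ ltl_sat r t' f2 /\
                     forall k, t <= k < t' -> ltl_sat r k f1
  end.

End Semantics.

Definition E_uncond (QA QB SA SB : finType)
    (A : template QA QB QA SA) (B : template QA QB QB SB) (n : nat)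
    (h : ltlx QA SA QB SB) : Prop :=
  exists r : nat -> config QA QB SA SB n,
    uncond_fair_run A B r /\ ltl_sat r 0 h.

(* Submission.v *)
Require Import Defs.
From mathcomp Require Import all_boot.
From Stdlib Require Import Classical ClassicalEpsilon FunctionalExtensionality.

Set Implicit Arguments.
Unset Strict Implicit.
Unset Printing Implicit Defensive.


Definition unitstep (s : nat -> nat) := forall N, s N <= s N.+1 <= (s N).+1.
Definition unbounded (s : nat -> nat) := forall i, exists N, i <= s N.

Lemma unit_mono s : unitstep s -> forall N M, N <= M -> s N <= s M.
Proof.
move=> hs N M /subnK <-; elim: (M - N) => [|d IH] //=.
by rewrite addSn; apply: leq_trans IH _; case/andP: (hs (d + N)).
Qed.

Lemma hit s N i : unitstep s -> unbounded s -> s N <= i ->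
  exists N', [/\ N <= N', s N' = i & forall N'', N <= N'' < N' -> s N'' < i].
Proof.
move=> hs hu hNi.
have ex : exists N', (N <= N') && (i <= s N').
  case: (hu i) => N0 hN0; exists (maxn N N0); rewrite leq_maxl /=.
  by apply: leq_trans hN0 (unit_mono hs _); rewrite leq_maxr.
case: (ex_minnP ex) => N' /andP[hNN' hiN'] hmin.
have lt : forall N'', N <= N'' < N' -> s N'' < i.
  move=> N'' /andP[h1 h2]; rewrite ltnNge; apply/negP => h3.
  by have := hmin N''; rewrite h1 h3 => /(_ isT); rewrite leqNgt h2.
exists N'; split=> //.
apply/eqP; rewrite eqn_leq hiN' andbT.
move: hNN'; rewrite leq_eqVlt => /orP[/eqP <- //|hlt].
case: N' hmin lt hiN' hlt => // N1 _ lt _ hlt.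
have h : s N1 < i by apply: lt; rewrite -ltnS hlt ltnSn.
case/andP: (hs N1) => _ h'.
exact: (leq_trans h' h).
Qed.

Lemma until_transfer (P1 P2 Q1 Q2 : nat -> Prop) s1 s2 :
  unitstep s1 -> unitstep s2 -> unbounded s1 -> unbounded s2 ->
  (forall N, P1 (s1 N) -> Q1 (s2 N)) -> (forall N, P2 (s1 N) -> Q2 (s2 N)) ->
  forall N, (exists t', s1 N <= t' /\ P2 t' /\ forall k, s1 N <= k < t' -> P1 k) ->
            (exists t', s2 N <= t' /\ Q2 t' /\ forall k, s2 N <= k < t' -> Q1 k).
Proof.
move=> h1 h2 u1 u2 HP1 HP2 N [t' [ht' [hP2 hP1]]].
case: (hit h1 u1 ht') => N' [hNN' hs1 hbef].
exists (s2 N'); split; first exact: unit_mono.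
split; first by apply: HP2; rewrite hs1.
move=> k /andP[hk1 hk2].
case: (hit h2 u2 hk1) => N'' [hN'' hs2 hbef2].
have hN''N' : N'' < N'.
  rewrite ltnNge; apply/negP => hc.
  have := hbef2 N'; rewrite hNN' /=.
  case: (ltngtP N' N'') => [hlt|hgt|heq].
  - by move=> /(_ isT); rewrite ltnNge (ltnW hk2).
  - by rewrite ltnNge hc in hgt.
  - by move: hk2; rewrite -hs2 heq ltnn.
rewrite -hs2; apply: HP1; apply: hP1.
by rewrite (unit_mono h1 hN'') /= hbef // hN'' hN''N'.
Qed.

Section LTLT.
Variables (QA QB SA SB : finType).

Definition atoms_eq n1 n2 (c1 : config QA QB SA SB n1) (c2 : config QA QB SA SB n2) :=
  forall a, atom_holds c1 a <-> atom_holds c2 a.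

Lemma ltl_path n1 n2 (r1 : nat -> config QA QB SA SB n1) (r2 : nat -> config QA QB SA SB n2) s1 s2 :
  unitstep s1 -> unitstep s2 -> unbounded s1 -> unbounded s2 ->
  (forall N, atoms_eq (r1 (s1 N)) (r2 (s2 N))) ->
  forall f N, ltl_sat r1 (s1 N) f <-> ltl_sat r2 (s2 N) f.
Proof.
move=> h1 h2 u1 u2 ha; elim=> [|a|f IH|f IHf g IHg|f IHf g IHg] N /=.
- by [].
- exact: ha.
- by rewrite IH.
- by rewrite IHf IHg.
- split.
  + apply: (until_transfer h1 h2 u1 u2) => M; [by rewrite IHf | by rewrite IHg].
  + apply: (until_transfer h2 h1 u2 u1) => M; [by rewrite IHf | by rewrite IHg].
Qed.
End LTLT.



Section Build.
Variables (QA QB SA SB : finType) (A : template QA QB QA SA) (B : template QA QB QB SB).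
Variables (n K : nat) (n_gt0 : 0 < n) (K_gt0 : 0 < K).
Variable x : nat -> config QA QB SA SB n.
Hypothesis xfair : uncond_fair_run A B x.

Definition p0 : 'I_n := Ordinal n_gt0.
Definition h0 : 'I_K := Ordinal K_gt0.
Definition sA m := (cs (x m)).1.
Definition sB m (i : 'I_n) := (cs (x m)).2 i.
Definition eA m := (ce (x m)).1.
Definition eB m (i : 'I_n) := (ce (x m)).2 i.
Definition mu m := cp (x m).

Lemma xfair' : [/\ is_initial A B (cs (x 0)),
  (forall t, step A B (cs (x t)) (ce (x t)) (cp (x t)) (cs (x t.+1))),
  (forall t (p : proc n), p <> cp (x t) -> linput (ce (x t.+1)) p = linput (ce (x t)) p) &
  (forall (p : proc n) (t : nat), exists t', t <= t' /\ cp (x t') = p)].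
Proof. by move: xfair; rewrite /uncond_fair_run /infinite_run => [[[? [? ?]] ?]]. Qed.

Lemma xstep m : step A B (cs (x m)) (ce (x m)) (mu m) (cs (x m.+1)).
Proof. by case: xfair' => _ H _ _. Qed.

Lemma xs_B m i : mu m <> Some i -> sB m.+1 i = sB m i.
Proof.
have := xstep m; rewrite /sB /step; case: (mu m) => [j|] /=.
- move=> [g [q' [_ [_ [_ H]]]]] hne; rewrite H.
  by case: eqP => // e; case: hne; rewrite e.
- by move=> [g [q' [_ [_ [_ H]]]]] _; rewrite H.
Qed.

Lemma xs_A m : mu m <> None -> sA m.+1 = sA m.
Proof.
have := xstep m; rewrite /sA /step; case: (mu m) => [j|] //=.
by move=> [g [q' [_ [_ [H _]]]]] _.
Qed.

Lemma xe_A m : mu m <> None -> eA m.+1 = eA m.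
Proof.
move=> h; case: xfair' => _ _ H _.
have : linput (ce (x m.+1)) None = linput (ce (x m)) None.
  by apply: H => e; apply: h; rewrite /mu e.
by case.
Qed.

Lemma xe_B m i : mu m <> Some i -> eB m.+1 i = eB m i.
Proof.
move=> h; case: xfair' => _ _ H _.
have : linput (ce (x m.+1)) (Some i) = linput (ce (x m)) (Some i).
  by apply: H => e; apply: h; rewrite /mu e.
by case.
Qed.

Lemma xmoves p m : exists m', m <= m' /\ mu m' = p.
Proof. by case: xfair' => _ _ _ H; apply: H. Qed.

Lemma xinit_A : sA 0 = t_init A.
Proof. by case: xfair' => [[H _]] _ _ _. Qed.
Lemma xinit_B i : sB 0 i = t_init B.
Proof. by case: xfair' => [[_ H]] _ _ _; apply: H. Qed.

Variable fl : 'I_K -> nat -> option 'I_n.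
Variable ex : nat -> option ('I_K * SB * {set QA + QB}).

Fixpoint Hgen (f : nat -> option 'I_n) m : QB :=
  if m is m'.+1 then (if f m' is Some i then sB m i else Hgen f m') else t_init B.

Lemma Hgen_ext f g m : (forall k, f k = g k) -> Hgen f m = Hgen g m.
Proof. by move=> e; elim: m => //= m ->; rewrite e. Qed.

Definition Hs h m := Hgen (fl h) m.
Definition moving (h : 'I_K) m : bool := if mu m is Some i then fl h m == Some i else false.
Definition ystart m : gstate QA QB K :=
  (sA m, fun h => if val h == 0 then sB m p0 else Hs h m).

Hypothesis Hcons : forall h m i, val h != 0 -> fl h m = Some i -> val i != 0 /\ Hs h m = sB m i.
Hypothesis Hcov : forall m (i : 'I_n), val i != 0 -> mu m <> Some i ->
  exists h : 'I_K, [/\ val h != 0, ~~ moving h m & Hs h m = sB m i].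
Hypothesis Hex : forall m h sg g, ex m = Some (h, sg, g) ->
  [/\ val h != 0, (Hs h m, sg, g, Hs h m) \in t_delta B &
      exists p : proc K, p <> Some h /\ lstate (ystart m) p \in g].
Hypothesis Hfair : forall h : 'I_K, val h != 0 -> forall m, exists m', m <= m' /\
  (moving h m' \/ exists sg g, ex m' = Some (h, sg, g)).

Lemma Hs_S h m : Hs h m.+1 = if fl h m is Some i then sB m.+1 i else Hs h m.
Proof. by []. Qed.

Lemma Hs_still h m : val h != 0 -> ~~ moving h m -> Hs h m.+1 = Hs h m.
Proof.
move=> hh; rewrite Hs_S /moving.
case e: (fl h m) => [i|] // hm.
have [_ ->] := Hcons hh e; apply: xs_B => em; by rewrite em eqxx in hm.
Qed.

Definition KS := K.+1.
Definition blk N := N %/ KS.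
Definition slt N := N %% KS.

Lemma slt_lt N : slt N < KS.
Proof. by rewrite /slt ltn_mod. Qed.
Lemma slt_le N : slt N <= K.
Proof. by have := slt_lt N. Qed.

Lemma blk_pos m s : s < KS -> blk (m * KS + s) = m.
Proof. by move=> hs; rewrite /blk divnMDl // divn_small // addn0. Qed.
Lemma slt_pos m s : s < KS -> slt (m * KS + s) = s.
Proof. by move=> hs; rewrite /slt modnMDl modn_small. Qed.
Lemma pos_eq N : N = blk N * KS + slt N.
Proof. exact: divn_eq. Qed.

Lemma posS_lt N : slt N < K -> blk N.+1 = blk N /\ slt N.+1 = (slt N).+1.
Proof.
move=> h; have hK : (slt N).+1 < KS by [].
have e : N.+1 = blk N * KS + (slt N).+1 by rewrite addnS -pos_eq.
by rewrite e; split; rewrite ?blk_pos ?slt_pos.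
Qed.
Lemma posS_eq N : slt N = K -> blk N.+1 = (blk N).+1 /\ slt N.+1 = 0.
Proof.
move=> h; have e : N.+1 = (blk N).+1 * KS + 0.
  by rewrite addn0 mulSn addnC /KS -{2}h addnS -pos_eq.
by rewrite e; split; rewrite ?blk_pos ?slt_pos.
Qed.

Lemma blk_mono N M : N <= M -> blk N <= blk M.
Proof. by move=> h; rewrite /blk leq_div2r. Qed.

Definition mover N : option (proc K) :=
  let m := blk N in let s := slt N in
  if s == 0 then (if ex m is Some (h, _, _) then Some (Some h) else None)
  else if (insub s : option 'I_K) is Some h then (if moving h m then Some (Some h) else None)
  else (match mu m with None => Some None | Some i => if val i == 0 then Some (Some h0) else None end).

Definition act N := mover N != None.

Definition gst N : gstate QA QB K :=
  (sA (blk N), fun h => if val h == 0 then sB (blk N) p0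
                        else if val h < slt N then Hs h (blk N).+1 else Hs h (blk N)).

Definition dflt : SB := eB 0 p0.
Definition lab N : SB :=
  if slt N == 0 then (if ex (blk N) is Some (_, sg, _) then sg else dflt)
  else (if mu (blk N) is Some i then eB (blk N) i else dflt).

Lemma mover_K m : mover (m * KS + K) =
  match mu m with None => Some None | Some i => if val i == 0 then Some (Some h0) else None end.
Proof.
rewrite /mover blk_pos // slt_pos //.
have -> : (K == 0) = false by apply/eqP => e; move: K_gt0; rewrite e.
by rewrite insubN // ltnn.
Qed.

Lemma mover_h m (h : 'I_K) : val h != 0 ->
  mover (m * KS + val h) = if moving h m then Some (Some h) else None.
Proof.
have hs : val h < KS by rewrite /KS ltnS; exact: (ltnW (ltn_ord h)).
by move=> hh; rewrite /mover blk_pos // slt_pos // (negbTE hh) valK.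
Qed.

Lemma mover_0 m : mover (m * KS + 0) = if ex m is Some (h, _, _) then Some (Some h) else None.
Proof. by rewrite /mover blk_pos // slt_pos. Qed.

Lemma lt_next N : N < (blk N).+1 * KS.
Proof. by rewrite mulSn addnC {1}(pos_eq N) ltn_add2l slt_lt. Qed.

Lemma le_blk N m : blk N < m -> N <= m * KS.
Proof.
move=> h; apply: ltnW; apply: leq_trans (lt_next N) _.
by rewrite leq_mul2r h orbT.
Qed.

Lemma ex_act N : exists N', (N <= N') && act N'.
Proof.
have [m' [hm' e]] := xmoves None (blk N).+1.
exists (m' * KS + K); rewrite /act mover_K e andbT.
by apply: leq_trans (le_blk hm') (leq_addr _ _).
Qed.

Lemma ex_mv (h : 'I_K) N : exists N', (N <= N') && ((val h == 0) || (mover N' == Some (Some h))).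
Proof.
case: (eqVneq (val h) 0) => hh; first by exists N; rewrite leqnn.
have [m' [hm' [e|[sg [g e]]]]] := Hfair hh (blk N).+1.
- exists (m' * KS + val h); rewrite mover_h // e eqxx orbT andbT.
  by apply: leq_trans (le_blk hm') (leq_addr _ _).
- exists (m' * KS + 0); rewrite mover_0 e eqxx orbT andbT.
  by rewrite addn0; apply: le_blk.
Qed.

Definition firstact N := ex_minn (ex_act N).
Definition nm h N := ex_minn (ex_mv h N).

Lemma firstactP N : [/\ N <= firstact N, act (firstact N) &
  forall M, N <= M -> act M -> firstact N <= M].
Proof.
rewrite /firstact; case: (ex_minnP (ex_act N)) => F /andP[h1 h2] h3; split=> //.
by move=> M hM aM; apply: h3; rewrite hM aM.
Qed.

Lemma firstact_noact N M : N <= M < firstact N -> ~~ act M.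
Proof.
case/andP=> h1 h2; apply/negP => aM; have [_ _ h] := firstactP N.
by have := h M h1 aM; rewrite leqNgt h2.
Qed.

Lemma firstact_id N : act N -> firstact N = N.
Proof.
move=> aN; have [h1 _ h3] := firstactP N; apply/eqP; rewrite eqn_leq h1 andbT.
exact: h3.
Qed.

Lemma firstact_S N : ~~ act N -> firstact N.+1 = firstact N.
Proof.
move=> naN; have [h1 h2 h3] := firstactP N; have [g1 g2 g3] := firstactP N.+1.
have hN : N < firstact N.
  rewrite ltn_neqAle h1 andbT; apply/eqP => e; by rewrite e h2 in naN.
apply/eqP; rewrite eqn_leq (g3 _ hN h2) /=.
by apply: h3 => //; apply: ltnW.
Qed.

Definition gin N : ginput SA SB K :=
  (eA (blk N), fun h => if val h == 0 then eB (blk N) p0 else lab (nm h N)).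

Fixpoint P t := if t is t'.+1 then firstact (P t').+1 else firstact 0.

Fixpoint cnt N := if N is N'.+1 then cnt N' + act N' else 0.

Lemma cnt_mono N M : N <= M -> cnt N <= cnt M.
Proof.
move/subnK <-; elim: (M - N) => //= d IH; rewrite ?addSn /=.
exact: leq_trans IH (leq_addr _ _).
Qed.

Lemma P_cnt N : P (cnt N) = firstact N.
Proof.
elim: N => //= N IH.
case aN: (act N) => /=.
- by rewrite addn1 /= IH (firstact_id (N := N)).
- by rewrite addn0 IH firstact_S // aN.
Qed.

Lemma cnt_noact N M : N <= M -> (forall i, N <= i < M -> ~~ act i) -> cnt M = cnt N.
Proof.
move/subnK <-; elim: (M - N) => //= d IH H.
rewrite ?addSn /= IH; last by move=> i /andP[h1 h2]; apply: H; rewrite h1 ltnS ltnW.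
by rewrite (negbTE (H (d + N) _)) ?addn0 // leq_addl /= ltnSn.
Qed.

Lemma P_act t : act (P t).
Proof. case: t => [|t] /=; [by case: (firstactP 0) | by case: (firstactP (P t).+1)]. Qed.

Lemma cnt_P t : cnt (P t) = t.
Proof.
elim: t => [|t IH] /=.
- by apply: (cnt_noact (N := 0)) => // i hi; exact: (firstact_noact hi).
- have [h1 _ _] := firstactP (P t).+1.
  rewrite (cnt_noact h1); last by move=> i hi; exact: (firstact_noact hi).
  rewrite /= IH.
  by rewrite P_act addn1.
Qed.

Lemma P_S t : P t.+1 = firstact (P t).+1.
Proof. by []. Qed.

Definition y t : config QA QB SA SB K :=
  (gst (P t), gin (P t), if mover (P t) is Some p then p else None).

Lemma gst_inact N : ~~ act N -> gst N.+1 = gst N.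
Proof.
rewrite /act negbK => /eqP hm.
have := slt_le N; rewrite leq_eqVlt => /orP[/eqP hK|hK].
- have [e1 e2] := posS_eq hK.
  move: hm; rewrite {1}(pos_eq N) hK mover_K => hm.
  have hA : mu (blk N) <> None by move=> e; rewrite e in hm.
  have hB : mu (blk N) <> Some p0.
    by move=> e; rewrite e /= in hm.
  rewrite /gst e1 e2 hK xs_A //; congr pair; apply: functional_extensionality => h.
  rewrite ltn_ord xs_B //.
- have [e1 e2] := posS_lt hK.
  rewrite /gst e1 e2; congr pair; apply: functional_extensionality => h.
  case: eqP => // hh.
  rewrite ltnS leq_eqVlt; case: eqP => // hs /=.
  have hh' : val h != 0 by apply/eqP.
  move: hm; rewrite {1}(pos_eq N) -hs mover_h //.
  case mv: (moving h (blk N)) => // _.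
  by rewrite ltnn Hs_still // mv.
Qed.

Lemma gst_between N M : N <= M -> (forall i, N <= i < M -> ~~ act i) -> gst M = gst N.
Proof.
move/subnK <-; elim: (M - N) => //= d IH H.
rewrite addSn gst_inact ?IH //; last by apply: H; rewrite leq_addl /= ltnSn.
by move=> i /andP[h1 h2]; apply: H; rewrite h1 ltnS ltnW.
Qed.

Lemma gst_still N h : val h != 0 -> ~~ moving h (blk N) -> (gst N).2 h = Hs h (blk N).
Proof. by move=> hh hm; rewrite /gst /= (negbTE hh); case: ifP => // _; rewrite Hs_still. Qed.

Lemma p0_eq (i : 'I_n) : val i == 0 -> i = p0.
Proof. by move=> /eqP e; apply: val_inj. Qed.
Lemma h0_eq (h : 'I_K) : val h == 0 -> h = h0.
Proof. by move=> /eqP e; apply: val_inj. Qed.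

Lemma guard_tr N (px : proc n) (q : proc K) g :
  mu (blk N) = px ->
  (q = None -> px = None) ->
  (forall h, q = Some h -> val h == 0 -> px = Some p0) ->
  (forall h, q = Some h -> val h != 0 -> moving h (blk N)) ->
  guard_sat (cs (x (blk N))) px g -> guard_sat (gst N) q g.
Proof.
move=> hpx hq0 hq1 hq2 [p' [hp' hin]].
case: p' hp' hin => [i'|] hp' hin.
- case: (boolP (val i' == 0)) => hi'.
  + exists (Some h0); split.
    * move=> e; have := hq1 _ (esym e) (eqxx _); move=> ep.
      by apply: hp'; rewrite ep (p0_eq hi').
    * by rewrite /= (p0_eq hi') in hin.
  + have hne : mu (blk N) <> Some i' by rewrite hpx => e; apply: hp'; rewrite e.
    have [h' [hh' hm' he']] := Hcov hi' hne.
    exists (Some h'); split.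
    * by move=> e; have := hq2 _ (esym e) hh'; rewrite (negbTE hm').
    * by change (inr ((gst N).2 h') \in g); rewrite gst_still // he'.
- exists None; split; last by [].
  by move=> e; apply: hp'; rewrite hq0 // e.
Qed.

Lemma gst_0 N : slt N = 0 -> gst N = ystart (blk N).
Proof.
move=> hs; rewrite /gst /ystart hs; congr pair.
Qed.

Lemma nm_id h N : mover N = Some (Some h) -> nm h N = N.
Proof.
move=> hm; rewrite /nm; case: (ex_minnP (ex_mv h N)) => M /andP[h1 _] h3.
apply/eqP; rewrite eqn_leq h1 andbT; apply: h3; by rewrite leqnn hm eqxx orbT.
Qed.

Lemma gin_h N h : val h != 0 -> mover N = Some (Some h) -> (gin N).2 h = lab N.
Proof. by move=> hh hm; rewrite /gin /= (negbTE hh) nm_id. Qed.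

Lemma step_act N p : mover N = Some p -> step A B (gst N) (gin N) p (gst N.+1).
Proof.
move=> hm; set m := blk N.
have := slt_le N; rewrite leq_eqVlt => /orP[/eqP hK|hK].
-
  have [e1 e2] := posS_eq hK.
  move: hm; rewrite {1}(pos_eq N) hK mover_K -/m.
  have xs := xstep m.
  case em: (mu m) xs => [i|] xs.
  + case: ifP => // hi [<-]; have ei := p0_eq hi; subst i.
    move: xs => [g [q' [hd [hg [h1 h2]]]]].
    exists g, q'; refine (conj _ (conj _ (conj _ _))).
    * by rewrite /gst /gin /=.
    * apply: (guard_tr (px := Some p0)) => //.
      move=> h [<-] hh; by rewrite eqxx in hh.
    * by rewrite /gst e1 /= -/m /sA h1.
    * move=> j; rewrite /gst e1 e2 /= -/m; case: (boolP (val j == 0)) => hj.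
      -- by rewrite (h0_eq hj) eqxx /sB h2 eqxx.
      -- have -> : (j == h0) = false by apply/eqP => e; rewrite e eqxx in hj.
         by rewrite hK ltn_ord.
  + move=> [<-]; move: xs => [g [q' [hd [hg [h1 h2]]]]].
    exists g, q'; refine (conj _ (conj _ (conj _ _))).
    * by [].
    * by apply: (guard_tr (px := None)).
    * by rewrite /gst e1 /= -/m /sA h1.
    * move=> j; rewrite /gst e1 e2 /= -/m; case: ifP => _; [by rewrite /sB h2 | by rewrite hK ltn_ord].
- have [e1 e2] := posS_lt hK.
  case: (eqVneq (slt N) 0) => h0s.
  +
    move: hm; rewrite {1}(pos_eq N) h0s mover_0 -/m.
    case ee: (ex m) => [[[h sg] g]|] // [<-].
    have [hh hd [p' [hp' hin]]] := Hex ee.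
    exists g, (Hs h m); refine (conj _ (conj _ (conj _ _))).
    * rewrite /gst /gin /= -/m (negbTE hh) h0s ltn0.
      rewrite nm_id; first by rewrite /lab h0s eqxx -/m ee.
      by rewrite {1}(pos_eq N) h0s mover_0 -/m ee.
    * exists p'; split => //; by rewrite gst_0.
    * by rewrite /gst e1.
    * move=> j; rewrite /gst e1 e2 h0s /= -/m.
      case: (eqVneq j h) => [->|hj].
      -- by rewrite (negbTE hh) ltnS leqn0 (negbTE hh).
      -- by case: ifP => // hj0; rewrite ltnS leqn0 hj0.
  +
    have hs : slt N < K by [].
    move: hm; rewrite {1}(pos_eq N) -/m.
    set h := Ordinal hs.
    have hh : val h != 0 by [].
    rewrite -[slt N]/(val h) mover_h //.
    case mv: (moving h m) => // -[<-].
    move: (mv); rewrite /moving; case em: (mu m) => [i|] // /eqP ef.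
    have [hi0 hHs] := Hcons hh ef.
    have := xstep m; rewrite em => -[g [q' [hd [hg [h1 h2]]]]].
    exists g, q'; refine (conj _ (conj _ (conj _ _))).
    * rewrite /gst /gin /= -/m (negbTE hh) ltnn hHs.
      rewrite nm_id; first by rewrite /lab (negbTE h0s) -/m em.
      by rewrite {1}(pos_eq N) -/m -[slt N]/(val h) mover_h // mv.
    * apply: (guard_tr (px := Some i)) => //.
      -- by move=> h' [<-] hh'; rewrite hh' in hh.
      -- by move=> h' [<-].
    * by rewrite /gst e1.
    * move=> j; rewrite /gst e1 e2 /= -/m; case: ifP => hj0.
      -- have -> : (j == h) = false by apply/eqP => e; rewrite e (negbTE hh) in hj0.
         by [].
      -- case: (eqVneq j h) => [->|hj].
       ++ by rewrite ltnSn /= Hs_S ef /sB h2 eqxx.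
       ++ rewrite ltnS leq_eqVlt.
         have -> : (val j == slt N) = false.
           by apply/negbTE; rewrite -[slt N]/(val h) (inj_eq val_inj).
         by [].
Qed.

Lemma blk_step M : blk M.+1 = blk M \/ (mover M = match mu (blk M) with None => Some None
   | Some i => if val i == 0 then Some (Some h0) else None end /\ blk M.+1 = (blk M).+1).
Proof.
have := slt_le M; rewrite leq_eqVlt => /orP[/eqP hK|hK].
- right; have [e1 _] := posS_eq hK; split => //.
  by rewrite {1}(pos_eq M) hK mover_K.
- by left; have [] := posS_lt hK.
Qed.

Lemma constA N M : N <= M -> (forall i, N <= i < M -> mover i <> Some None) ->
  sA (blk M) = sA (blk N) /\ eA (blk M) = eA (blk N).
Proof.
move/subnK <-; elim: (M - N) => //= d IH H.
have [h1 h2] : sA (blk (d + N)) = sA (blk N) /\ eA (blk (d + N)) = eA (blk N).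
  by apply: IH => i /andP[a b]; apply: H; rewrite a ltnS ltnW.
have hm : mover (d + N) <> Some None by apply: H; rewrite leq_addl ltnSn.
case: (blk_step (d + N)) => [e|[e1 e2]]; rewrite ?addSn ?e ?e2 //.
have hmu : mu (blk (d + N)) <> None by move=> e; rewrite e in e1.
by rewrite xs_A // xe_A.
Qed.

Lemma constB N M : N <= M -> (forall i, N <= i < M -> mover i <> Some (Some h0)) ->
  sB (blk M) p0 = sB (blk N) p0 /\ eB (blk M) p0 = eB (blk N) p0.
Proof.
move/subnK <-; elim: (M - N) => //= d IH H.
have [h1 h2] : sB (blk (d + N)) p0 = sB (blk N) p0 /\ eB (blk (d + N)) p0 = eB (blk N) p0.
  by apply: IH => i /andP[a b]; apply: H; rewrite a ltnS ltnW.
have hm : mover (d + N) <> Some (Some h0) by apply: H; rewrite leq_addl ltnSn.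
case: (blk_step (d + N)) => [e|[e1 e2]]; rewrite ?addSn ?e ?e2 //.
have hmu : mu (blk (d + N)) <> Some p0 by move=> e; rewrite e /= in e1.
by rewrite xs_B // xe_B.
Qed.

Lemma nm_skip h N M : val h != 0 -> N <= M ->
  (forall i, N <= i < M -> mover i <> Some (Some h)) -> nm h N = nm h M.
Proof.
move=> hh hNM H; rewrite /nm.
case: (ex_minnP (ex_mv h N)) => a /andP[a1 a2] a3.
case: (ex_minnP (ex_mv h M)) => b /andP[b1 b2] b3.
rewrite (negbTE hh) /= in a2 b2.
have aM : M <= a.
  rewrite leqNgt; apply/negP => lt; apply: (H a); first by rewrite a1.
  exact/eqP.
apply/eqP; rewrite eqn_leq; apply/andP; split.
- by apply: a3; rewrite (leq_trans hNM b1) b2 orbT.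
- by apply: b3; rewrite aM a2 orbT.
Qed.

Lemma ex_mover p N : exists N', N <= N' /\ mover N' = Some p.
Proof.
case: p => [h|].
- case: (boolP (val h == 0)) => hh.
  + have [m' [hm' e]] := xmoves (Some p0) (blk N).+1.
    exists (m' * KS + K); rewrite mover_K e /= (h0_eq hh); split => //.
    by apply: leq_trans (le_blk hm') (leq_addr _ _).
  + have [m' [hm' [e|[sg [g e]]]]] := Hfair hh (blk N).+1.
    * exists (m' * KS + val h); rewrite mover_h // e; split => //.
      by apply: leq_trans (le_blk hm') (leq_addr _ _).
    * exists (m' * KS + 0); rewrite mover_0 e; split => //.
      by rewrite addn0; apply: le_blk.
- have [m' [hm' e]] := xmoves None (blk N).+1.
  exists (m' * KS + K); rewrite mover_K e; split => //.
  by apply: leq_trans (le_blk hm') (leq_addr _ _).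
Qed.

Lemma mover_P t : exists p, mover (P t) = Some p.
Proof. by have := P_act t; rewrite /act; case: (mover (P t)) => // p _; exists p. Qed.

Lemma gst_P t : gst (P t.+1) = gst (P t).+1.
Proof.
rewrite P_S; have [h1 _ _] := firstactP (P t).+1.
by apply: gst_between => // i hi; exact: (firstact_noact hi).
Qed.

Lemma build : exists y : nat -> config QA QB SA SB K,
  uncond_fair_run A B y /\ forall f, ltl_sat y 0 f <-> ltl_sat x 0 f.
Proof.
exists y; split.
- rewrite /uncond_fair_run /infinite_run; split; [split; [|split]|].
  +
    rewrite /y /cs /=.
    have -> : gst (firstact 0) = gst 0.
      have [h1 _ _] := firstactP 0.
      by apply: gst_between => // i hi; exact: (firstact_noact hi).
    split; first by rewrite /gst /= xinit_A.
    move=> i; rewrite /gst /=; case: ifP => _; first by rewrite /sB -/(sB 0 p0) xinit_B.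
    by [].
  + move=> t; rewrite /y /cs /ce /cp /= gst_P.
    have [p hp] := mover_P t; rewrite hp.
    exact: step_act.
  + move=> t p; rewrite /y /ce /cp /=.
    have [q hq] := mover_P t; rewrite hq => hpq.
    have [h1 _ _] := firstactP (P t).+1.
    have hNM : P t <= P t.+1 by rewrite P_S; apply: ltnW.
    have Hb : forall i, P t <= i < P t.+1 -> mover i <> Some p.
      move=> i /andP[a b]; case: (ltngtP (P t) i) a => // [lt|eq] _.
      * have : ~~ act i by apply: (firstact_noact (N := (P t).+1)); rewrite lt -P_S.
        by rewrite /act negbK => /eqP ->.
      * by rewrite -eq hq => -[e]; apply: hpq; rewrite e.
    case: p hpq Hb => [h|] hpq Hb.
    * rewrite /gin /=; case: ifP => hh.
      -- have Hb' : forall i, P t <= i < P t.+1 -> mover i <> Some (Some h0).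
           by move=> i hi; rewrite -(h0_eq hh); apply: Hb.
         by have [_ ->] := constB hNM Hb'.
      -- by rewrite (nm_skip (negbT hh) hNM).
    * by rewrite /gin /=; have [_ ->] := constA hNM Hb.
  + move=> p t.
    have [N' [h1 h2]] := ex_mover p (P t).
    exists (cnt N'); split.
    * by rewrite -{1}(cnt_P t); apply: cnt_mono.
    * rewrite /y /cp /= P_cnt firstact_id ?h2 //.
      by rewrite /act h2.
-
  move=> f.
  have us1 : unitstep blk.
    move=> N; case: (blk_step N) => [->|[_ ->]]; by rewrite ?leqnn ?leqnSn.
  have us2 : unitstep cnt.
    by move=> N /=; case: (act N); rewrite ?addn1 ?addn0 ?leqnSn ?leqnn.
  have ub1 : unbounded blk.
    by move=> i; exists (i * KS + 0); rewrite blk_pos.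
  have ub2 : unbounded cnt.
    elim=> [|i [N hN]]; first by exists 0.
    have [f1 f2 _] := firstactP N.
    exists (firstact N).+1; rewrite /= f2 addn1 ltnS.
    exact: leq_trans hN (cnt_mono f1).
  have hat : forall N, atoms_eq (x (blk N)) (y (cnt N)).
    move=> N; rewrite /y P_cnt.
    have [h1 h2 h3] := firstactP N.
    have hna : forall i, N <= i < firstact N -> mover i = None.
      by move=> i hi; have := firstact_noact hi; rewrite /act negbK => /eqP.
    have [eA1 eA2] := constA h1 (fun i hi => ltac:(by rewrite hna)).
    have [eB1 eB2] := constB h1 (fun i hi => ltac:(by rewrite hna)).
    case=> [q|s|q|s] /=.
    + by rewrite -/(sA (blk N)) -eA1.
    + by rewrite -/(eA (blk N)) -eA2.
    + split=> -[i [hi e]].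
      * exists h0; split => //; rewrite eqxx eB1 -e.
        by rewrite (p0_eq (introT eqP hi)).
      * exists p0; split => //; move: e; rewrite (h0_eq (introT eqP hi)) /= eB1.
        by [].
    + split=> -[i [hi e]].
      * exists h0; split => //; rewrite eqxx eB2 -e.
        by rewrite (p0_eq (introT eqP hi)).
      * exists p0; split => //; move: e; rewrite (h0_eq (introT eqP hi)) /= eB2.
        by [].
  have := ltl_path us1 us2 ub1 ub2 hat f 0.
  by rewrite /= /blk div0n => ->.
Qed.

End Build.



Definition pb (P : Prop) : bool := if excluded_middle_informative P then true else false.
Lemma pbP (P : Prop) : reflect P (pb P).
Proof. by rewrite /pb; case: excluded_middle_informative => h; constructor. Qed.

Inductive dynrole (Q : Type) := DSit of Q | DFloat of Q.

Section Scheme.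
Variables (QA QB SA SB : finType) (A : template QA QB QA SA) (B : template QA QB QB SB).
Variables (n K : nat) (n_gt0 : 0 < n) (K_gt0 : 0 < K).
Variable x : nat -> config QA QB SA SB n.
Hypothesis xfair : uncond_fair_run A B x.

Local Notation sB := (sB x).
Local Notation sA := (sA x).
Local Notation mu := (mu x).
Local Notation p0 := (p0 n_gt0).

Variables (V Inf : {set QB}) (f l : QB -> nat) (ifl il : QB -> 'I_n) (T0 : nat).
Variables (rep : QB -> QB) (leader : QB -> 'I_n) (spec : option QB) (p1 : 'I_n).

Definition cond q m : Prop := exists sg : SB * {set QA + QB},
  (q, sg.1, sg.2, q) \in t_delta B /\
  (inl (sA m) \in sg.2 \/ inr (sB m p0) \in sg.2 \/
   exists i : 'I_n, [/\ val i != 0, mu m <> Some i, sB m i <> q & inr (sB m i) \in sg.2]).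

Hypothesis HV : forall m (i : 'I_n), val i != 0 -> sB m i \in V.
Hypothesis HInfV : forall q, q \in Inf -> q \in V.
Hypothesis Hf1 : forall q, q \in V -> val (ifl q) != 0 /\ sB (f q) (ifl q) = q.
Hypothesis Hf2 : forall q m (i : 'I_n), val i != 0 -> sB m i = q -> f q <= m.
Hypothesis HfT : forall q, q \in Inf -> f q <= T0.
Hypothesis Hl : forall q, q \in V -> q \notin Inf ->
  [/\ f q <= l q, val (il q) != 0, sB (l q) (il q) = q, mu (l q) = Some (il q) &
      forall m (i : 'I_n), val i != 0 -> sB m i = q -> m <= l q].
Hypothesis Hrep : forall q, q \in Inf -> rep q \in Inf /\ rep (rep q) = rep q.
Hypothesis Hrspec : forall q, q \in Inf -> Some q != spec -> Some (rep q) != spec.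
Hypothesis Hlead : forall r, r \in Inf -> val (leader r) != 0.
Hypothesis Hvis : forall q, q \in Inf -> Some q != spec ->
  forall m, exists m', m <= m' /\ sB m' (leader (rep q)) = q.
Hypothesis Hspec : forall q, spec = Some q ->
  q \in Inf /\ forall m, exists m', [/\ m <= m', T0 <= m' & cond q m'].
Hypothesis Hp1 : val p1 != 0.

Definition swap m : option QB :=
  if T0 <= m then
    (if mu m is Some j then
       (let q := sB m j in
        if [&& val j != 0, q \in Inf, Some q != spec & leader (rep q) == j] then Some q else None)
     else None)
  else None.

Lemma swapP m q : swap m = Some q ->
  [/\ T0 <= m, q \in Inf, Some q != spec, mu m = Some (leader (rep q)) &
      sB m (leader (rep q)) = q].
Proof.
rewrite /swap; case: ifP => // hT; case e: (mu m) => [j|] //.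
case: ifP => // /and4P[hj hq hs /eqP hl] [<-]; split => //; by rewrite hl.
Qed.

Definition upd (sw : option QB) (r : dynrole QB) : dynrole QB :=
  match r, sw with
  | DSit q, Some q0 => if q == q0 then DFloat (rep q) else DSit q
  | DFloat r, Some q0 => if rep q0 == r then DSit q0 else DFloat r
  | r, None => r
  end.

Fixpoint role (lb : QB + QB) m : dynrole QB :=
  if m is m'.+1 then upd (swap m') (role lb m')
  else match lb with inl q => DSit q | inr r => DFloat r end.

Definition grp (lb : QB + QB) m : option 'I_n :=
  match role lb m with
  | DFloat r => if swap m is Some q0 then (if rep q0 == r then None else Some (leader r))
                else Some (leader r)
  | DSit q => if swap m == Some q then Some (leader (rep q))
              else if (lb == inl q) && (m < f q) then Some (ifl q) else None
  end.

Definition flab (lb : QB + QB) m : option 'I_n :=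
  match lb with
  | inl q => if q \in Inf then
               (if Some q == spec then (if m < f q then Some (ifl q) else None) else grp lb m)
             else (if m < f q then Some (ifl q) else if m < l q then None else Some (il q))
  | inr r => grp lb m
  end.

Definition HL lb m := Hgen B x (flab lb) m.

Lemma HL_S lb m : HL lb m.+1 = if flab lb m is Some i then sB m.+1 i else HL lb m.
Proof. by []. Qed.

Definition rel (r : dynrole QB) : bool :=
  match r with
  | DSit q => (q \in Inf) && (Some q != spec)
  | DFloat r => [&& r \in Inf, rep r == r & Some r != spec]
  end.

Definition glab (lb : QB + QB) := rel (role lb 0).

Lemma rel_upd m r : rel r -> rel (upd (swap m) r).
Proof.
case: r => [q|r] /=.
- case/andP=> hq hs; case e: (swap m) => [q0|] /=; last by rewrite hq hs.
  case: eqP => [eq|_] /=; last by rewrite hq hs.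
  have [h1 h2] := Hrep hq; by rewrite h1 h2 eqxx Hrspec.
- case/and3P=> h1 h2 h3; case e: (swap m) => [q0|] /=; last by rewrite h1 h2 h3.
  case: eqP => [eq|_] /=; last by rewrite h1 h2 h3.
  by have [? ? ? _ _] := swapP e; apply/andP.
Qed.

Lemma flab_glab lb m : glab lb -> flab lb m = grp lb m.
Proof.
case: lb => [q|r] //=; rewrite /glab /= => /andP[hq hs].
by rewrite hq (negbTE hs).
Qed.

Lemma role_inv lb m : glab lb -> rel (role lb m) /\
  match role lb m with
  | DFloat r => HL lb m = sB m (leader r)
  | DSit q => (f q <= m -> HL lb m = q) /\ (m < f q -> lb = inl q /\ HL lb m = sB m (ifl q))
  end.
Proof.
move=> hg; elim: m => [|m [IHr IH]].
- split => //; case: lb hg => [q|r] /= hg.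
  + split.
    * rewrite leqn0 => /eqP e; have [_ h] := Hf1 (HInfV (proj1 (andP hg))).
      by rewrite -h e /= (xinit_B xfair).
    * by move=> _; split => //=; rewrite (xinit_B xfair).
  + by rewrite (xinit_B xfair).
- split; first exact: rel_upd.
  rewrite /= HL_S flab_glab // /grp.
  case: (role lb m) IHr IH => [q|r] IHr IH /=.
  + case e: (swap m) => [q0|] /=.
    * case: (eqVneq q q0) => [eq|ne] /=.
      -- subst q0; rewrite eqxx /=.
         have [? ? ? _ _] := swapP e; by [].
      -- have -> : (Some q0 == Some q) = false by apply/eqP => -[e']; rewrite e' eqxx in ne.
         case: ifP => [/andP[/eqP el hm]|hn].
         ++ split => hf.
            ** have : m.+1 = f q by apply/eqP; rewrite eqn_leq hm hf.
               by move=> ->; have [_ ->] := Hf1 (HInfV (proj1 (andP IHr))).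
            ** by split.
         ++ split => hf.
            ** case: (ltnP m (f q)) => hmf.
               --- by have [el _] := IH.2 hmf; rewrite el eqxx hmf in hn.
               --- by apply: IH.1.
            ** by have [el _] := IH.2 (ltnW hf); rewrite el eqxx (ltnW hf) in hn.
    * case: ifP => [/andP[/eqP el hm]|hn].
      -- split => hf.
         ++ have : m.+1 = f q by apply/eqP; rewrite eqn_leq hm hf.
            by move=> ->; have [_ ->] := Hf1 (HInfV (proj1 (andP IHr))).
         ++ by split.
      -- split => hf.
         ++ case: (ltnP m (f q)) => hmf.
            ** by have [el _] := IH.2 hmf; rewrite el eqxx hmf in hn.
            ** by apply: IH.1.
         ++ by have [el _] := IH.2 (ltnW hf); rewrite el eqxx (ltnW hf) in hn.
  + case e: (swap m) => [q0|] /=.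
    * have [hT hq0 hs0 hmu hsb] := swapP e.
      case: eqP => [er|ne] /=.
      -- split => hf; last by move: (leq_trans (HfT hq0) hT); rewrite leqNgt ltnW.
         by rewrite IH -er hsb.
      -- by [].
    * by [].
Qed.

Lemma exists_roles m :
  (forall q, q \in Inf -> Some q != spec -> exists lb, glab lb /\ role lb m = DSit q) /\
  (forall r, r \in Inf -> rep r = r -> Some r != spec -> exists lb, glab lb /\ role lb m = DFloat r).
Proof.
elim: m => [|m [IH1 IH2]].
- split.
  + by move=> q hq hs; exists (inl q); rewrite /glab /= hq hs.
  + by move=> r hr er hs; exists (inr r); rewrite /glab /= hr er eqxx hs.
- case e: (swap m) => [q0|]; last first.
    split.
    + by move=> q hq hs; have [lb [g r]] := IH1 q hq hs; exists lb; rewrite /= r e.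
    + by move=> r hr er hs; have [lb [g r']] := IH2 r hr er hs; exists lb; rewrite /= r' e.
  have [hT hq0 hs0 hmu hsb] := swapP e.
  have [hr1 hr2] := Hrep hq0.
  split.
  + move=> q hq hs; case: (eqVneq q q0) => [->|ne].
    * have [lb [g r]] := IH2 (rep q0) hr1 hr2 (Hrspec hq0 hs0).
      by exists lb; rewrite /= r e /= eqxx.
    * have [lb [g r]] := IH1 q hq hs.
      by exists lb; rewrite /= r e /= (negbTE ne).
  + move=> r hr er hs; case: (eqVneq (rep q0) r) => [<-|ne].
    * have [lb [g r']] := IH1 q0 hq0 hs0.
      by exists lb; rewrite /= r' e /= eqxx.
    * have [lb [g r']] := IH2 r hr er hs.
      by exists lb; rewrite /= r' e /= (negbTE ne).
Qed.

Lemma fin_HL q : q \in V -> q \notin Inf ->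
  (forall m, m <= f q -> HL (inl q) m = sB m (ifl q)) /\
  (forall m, f q <= m <= l q -> HL (inl q) m = q) /\
  (forall m, l q <= m -> HL (inl q) m = sB m (il q)).
Proof.
move=> hV hI; have [hfl hil0 hil hmu hlast] := Hl hV hI.
have fl_eq : forall m, flab (inl q) m =
   if m < f q then Some (ifl q) else if m < l q then None else Some (il q).
  by move=> m; rewrite /flab (negbTE hI).
have A1 : forall m, m <= f q -> HL (inl q) m = sB m (ifl q).
  elim=> [|m IH] hm; first by rewrite /HL /= (xinit_B xfair).
  by rewrite HL_S fl_eq hm.
have A2 : forall m, f q <= m <= l q -> HL (inl q) m = q.
  move=> m /andP[h1 h2]; move/subnK: h1 h2 => <-; elim: (m - f q) => [|d IH] /=.
  + by rewrite add0n A1 //; have [] := Hf1 hV.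
  + move=> h; rewrite addSn HL_S fl_eq ltnNge leq_addl /= .
    by rewrite (leq_ltn_trans _ h) ?leqnSn // IH // ltnW.
split => //; split => //.
move=> m /subnK <-; elim: (m - l q) => [|d IH] /=.
- by rewrite add0n A2 ?hfl ?leqnn // hil.
- by rewrite addSn HL_S fl_eq ltnNge (leq_trans hfl) ?leq_addl //= ltnNge leq_addl.
Qed.

Lemma spec_HL q : spec = Some q -> q \in Inf ->
  (forall m, m <= f q -> HL (inl q) m = sB m (ifl q)) /\
  (forall m, f q <= m -> HL (inl q) m = q).
Proof.
move=> es hI.
have fl_eq : forall m, flab (inl q) m = if m < f q then Some (ifl q) else None.
  by move=> m; rewrite /flab hI es eqxx.
have A1 : forall m, m <= f q -> HL (inl q) m = sB m (ifl q).
  elim=> [|m IH] hm; first by rewrite /HL /= (xinit_B xfair).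
  by rewrite HL_S fl_eq hm.
split => // m /subnK <-; elim: (m - f q) => [|d IH] /=.
- by rewrite add0n A1 //; have [] := Hf1 (HInfV hI).
- by rewrite addSn HL_S fl_eq ltnNge leq_addl.
Qed.

Definition U : {set QB + QB} :=
  [set lb | match lb with inl q => q \in V | inr r => [&& r \in Inf, rep r == r & Some r != spec] end].

Lemma glab_U lb : glab lb -> lb \in U.
Proof. by case: lb => [q|r]; rewrite /glab /= inE // => /andP[/HInfV]. Qed.

Lemma cover_lab m (i : 'I_n) : val i != 0 -> mu m <> Some i ->
  exists lb, [/\ lb \in U, flab lb m = None & HL lb m = sB m i].
Proof.
move=> hi hmu; set r := sB m i.
have hV : r \in V by apply: HV.
have hf : f r <= m by apply: (Hf2 hi).
case: (boolP (r \in Inf)) => hI.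
- case: (eqVneq spec (Some r)) => hs.
  + exists (inl r); split; first by rewrite inE.
    * by rewrite /flab hI hs eqxx ltnNge hf.
    * by have [_ ->] := spec_HL hs hI.
  + have hs' : Some r != spec by rewrite eq_sym.
    case e: (swap m) => [q0|]; first case: (eqVneq q0 r) => [eq|ne].
    * subst q0; have [hT _ _ hmu' hsb] := swapP e.
      have [hr1 hr2] := Hrep hI.
      have [lb [g rl]] := (exists_roles m).2 (rep r) hr1 hr2 (Hrspec hI hs').
      exists lb; split; first exact: glab_U.
      -- by rewrite flab_glab // /grp rl e eqxx.
      -- by have [_] := role_inv m g; rewrite rl => ->.
    * have [lb [g rl]] := (exists_roles m).1 r hI hs'.
      exists lb; split; first exact: glab_U.
      -- rewrite flab_glab // /grp rl e.
         have -> : (Some q0 == Some r) = false by apply/eqP => -[]; apply/eqP.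
         by rewrite ltnNge hf andbF.
      -- by have [_] := role_inv m g; rewrite rl => -[h1 _]; apply: h1.
    * have [lb [g rl]] := (exists_roles m).1 r hI hs'.
      exists lb; split; first exact: glab_U.
      -- by rewrite flab_glab // /grp rl e /= ltnNge hf andbF.
      -- by have [_] := role_inv m g; rewrite rl => -[h1 _]; apply: h1.
- have [hfl hil0 hil hmul hlast] := Hl hV hI.
  have hml : m <= l r by apply: (hlast m i).
  have hml' : m < l r.
    rewrite ltn_neqAle hml andbT; apply/eqP => e.
    have : m.+1 <= l r.
      apply: (hlast m.+1 i hi); rewrite (xs_B xfair) //.
    by rewrite e ltnn.
  exists (inl r); split; first by rewrite inE.
  + by rewrite /flab (negbTE hI) ltnNge hf /= hml'.
  + by have [_ [-> //]] := fin_HL hV hI; rewrite hf hml.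
Qed.

Lemma grp_cons lb m i : glab lb -> grp lb m = Some i -> val i != 0 /\ HL lb m = sB m i.
Proof.
move=> g; have [hr hinv] := role_inv m g; rewrite /grp.
case: (role lb m) hr hinv => [q|r] /= hr hinv.
- case/andP: hr => hq hs.
  case: eqP => [e [<-]|_].
  + have [hT _ _ _ hsb] := swapP e.
    have [hr1 _] := Hrep hq; split; first exact: Hlead.
    by rewrite hsb; apply: hinv.1; apply: leq_trans (HfT hq) hT.
  + case: ifP => // /andP[_ hm] [<-]; split; first by have [] := Hf1 (HInfV hq).
    by have [_ ->] := hinv.2 hm.
- case/and3P: hr => hr _ _.
  have H : Some (leader r) = Some i -> val i != 0 /\ HL lb m = sB m i.
    by move=> [<-]; split => //; apply: Hlead.
  by case: (swap m) => [q0|] //; case: ifP.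
Qed.

Lemma cons_lab lb m i : lb \in U -> flab lb m = Some i -> val i != 0 /\ HL lb m = sB m i.
Proof.
case: lb => [q|r]; rewrite inE => hU.
- case: (boolP (q \in Inf)) => hI.
  + case: (eqVneq (Some q) spec) => hs.
    * rewrite /flab hI hs eqxx; case: ifP => // hm [<-].
      split; first by have [] := Hf1 hU.
      by have [H _] := spec_HL (esym hs) hI; rewrite H //; apply: ltnW.
    * have g : glab (inl q) by rewrite /glab /= hI hs.
      by rewrite flab_glab //; apply: grp_cons.
  + have [hfl hil0 hil hmul hlast] := Hl hU hI.
    rewrite /flab (negbTE hI); case: ifP => hm.
    * move=> [<-]; split; first by have [] := Hf1 hU.
      by have [H _] := fin_HL hU hI; rewrite H //; apply: ltnW.
    * case: ifP => // hl [<-]; split => //.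
      by have [_ [_ H]] := fin_HL hU hI; rewrite H // leqNgt hl.
- by rewrite /flab; apply: grp_cons.
Qed.

Lemma next_move (j : 'I_n) m : exists m', [/\ m <= m', mu m' = Some j, sB m' j = sB m j &
  forall k, m <= k < m' -> mu k <> Some j].
Proof.
have ex0 : exists k, (m <= k) && (mu k == Some j).
  by have [k [h1 h2]] := xmoves xfair (Some j) m; exists k; rewrite h1 h2 eqxx.
case: (ex_minnP ex0) => m' /andP[h1 /eqP h2] h3.
have hb : forall k, m <= k < m' -> mu k <> Some j.
  move=> k /andP[a b] e; have := h3 k; rewrite a e eqxx => /(_ isT).
  by rewrite leqNgt b.
exists m'; split => //.
move: h1 hb; move/subnK <-; elim: (m' - m) => // d IH hb.
rewrite addSn (xs_B xfair); last by apply: hb; rewrite leq_addl /= ltnSn.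
by apply: IH => k /andP[a b]; apply: hb; rewrite a ltnS ltnW.
Qed.

Definition lmoves lb m := exists j, mu m = Some j /\ flab lb m = Some j.

Lemma sit_fair lb q m : glab lb -> T0 <= m -> role lb m = DSit q ->
  exists m', m <= m' /\ lmoves lb m'.
Proof.
move=> g hT rl; have [hr _] := role_inv m g; rewrite rl /= in hr.
case/andP: hr => hq hs; set j := leader (rep q).
have [hr1 _] := Hrep hq.
have ex0 : exists k, [&& m <= k, mu k == Some j & sB k j == q].
  have [m2 [h2 e2]] := Hvis hq hs m.
  have [m3 [h3 e3 s3 _]] := next_move j m2.
  by exists m3; rewrite (leq_trans h2 h3) e3 s3 e2 !eqxx.
case: (ex_minnP ex0) => m1 /and3P[h1 /eqP e1 /eqP s1] hmin.
have keep : forall k, m <= k <= m1 -> role lb k = DSit q.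
  move=> k /andP[a]; move/subnK: a => <-; elim: (k - m) => [|d IH] hk; first by rewrite add0n.
  rewrite addSn /= IH; last by apply: ltnW.
  rewrite /upd; case e: (swap (d + m)) => [q0|] //.
  case: eqP => // eq; subst q0.
  have [_ _ _ hmu hsb] := swapP e.
  have := hmin (d + m); rewrite leq_addl hmu hsb !eqxx => /(_ isT).
  by rewrite leqNgt hk.
exists m1; split => //; exists j; split => //.
rewrite flab_glab // /grp keep ?h1 ?leqnn //.
have -> : swap m1 = Some q.
  rewrite /swap (leq_trans hT h1) e1 s1 hq hs eqxx Hlead //.
by rewrite eqxx.
Qed.

Lemma float_fair lb r m : glab lb -> T0 <= m -> role lb m = DFloat r ->
  exists m', m <= m' /\ lmoves lb m'.
Proof.
move=> g hT rl; have [hr _] := role_inv m g; rewrite rl /= in hr.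
case/and3P: hr => hr1 /eqP hr2 hr3; set j := leader r.
have [m1 [h1 e1 _ hb]] := next_move j m.
have keep : forall k, m <= k <= m1 -> role lb k = DFloat r.
  move=> k /andP[a]; move/subnK: a => <-; elim: (k - m) => [|d IH] hk; first by rewrite add0n.
  rewrite addSn /= IH; last by apply: ltnW.
  rewrite /upd; case e: (swap (d + m)) => [q0|] //.
  case: eqP => // eq.
  have [_ _ _ hmu _] := swapP e; exfalso; apply: (hb (d + m)).
    by rewrite leq_addl -addSn.
  by rewrite hmu eq.
case e: (swap m1) => [q0|]; first case: (eqVneq (rep q0) r) => eq.
- have [hT0 hq0 hs0 _ _] := swapP e.
  have rl' : role lb m1.+1 = DSit q0 by rewrite /= keep ?h1 ?leqnn // /upd e eq eqxx.
  have [m' [hm' mv]] := sit_fair g (leq_trans hT0 (leqnSn _)) rl'.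
  by exists m'; split => //; apply: leq_trans hm'; apply: leq_trans h1 (leqnSn _).
- exists m1; split => //; exists j; split => //.
  by rewrite flab_glab // /grp keep ?h1 ?leqnn // e (negbTE eq).
- exists m1; split => //; exists j; split => //.
  by rewrite flab_glab // /grp keep ?h1 ?leqnn // e.
Qed.

Lemma lab_fair lb : lb \in U -> forall m, exists m', m <= m' /\
  (lmoves lb m' \/ exists q, [/\ spec = Some q, lb = inl q, T0 <= m' & cond q m']).
Proof.
move=> hU m.
case: (boolP (glab lb)) => g.
- set m0 := maxn m T0.
  have [hr _] := role_inv m0 g.
  case rl: (role lb m0) hr => [q|r] _.
  + have [m' [h1 h2]] := sit_fair g (leq_maxr _ _) rl.
    by exists m'; split; [apply: leq_trans h1; rewrite leq_maxl | left].
  + have [m' [h1 h2]] := float_fair g (leq_maxr _ _) rl.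
    by exists m'; split; [apply: leq_trans h1; rewrite leq_maxl | left].
- case: lb hU g => [q|r]; rewrite inE /glab /= => hU g; last by rewrite hU in g.
  case: (boolP (q \in Inf)) => hI.
  + have hs : spec = Some q by move: g; rewrite hI /=; case: eqP.
    have [_ H] := Hspec hs; have [m' [h1 h2 h3]] := H m.
    by exists m'; split => //; right; exists q.
  + have [hfl hil0 hil hmul hlast] := Hl hU hI.
    have [m' [h1 h2]] := xmoves xfair (Some (il q)) (maxn m (l q)).
    exists m'; split; first by apply: leq_trans h1; rewrite leq_maxl.
    left; exists (il q); split => //.
    have hl : l q <= m' by apply: leq_trans h1; rewrite leq_maxr.
    by rewrite /flab (negbTE hI) ltnNge (leq_trans hfl hl) /= ltnNge hl.
Qed.

Hypothesis HU : #|U| < K.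

Definition ldef : QB + QB := inl (t_init B).
Definition lab_of (h : 'I_K) : option (QB + QB) :=
  if (0 < val h) && (val h <= #|U|) then Some (nth ldef (enum U) (val h).-1) else None.
Definition aide_of lb : 'I_K := insubd (h0 K_gt0) (index lb (enum U)).+1.

Lemma aide_ok lb : lb \in U -> val (aide_of lb) = (index lb (enum U)).+1 /\ lab_of (aide_of lb) = Some lb.
Proof.
move=> hU.
have hi : index lb (enum U) < #|U| by rewrite cardE index_mem mem_enum.
have hv : val (aide_of lb) = (index lb (enum U)).+1.
  by rewrite /aide_of val_insubd (leq_ltn_trans hi HU).
split => //; rewrite /lab_of hv /= hi /= nth_index //; by rewrite mem_enum.
Qed.

Lemma lab_of_some h lb : lab_of h = Some lb -> [/\ lb \in U, aide_of lb = h & val h != 0].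
Proof.
rewrite /lab_of; case: ifP => // /andP[h1 h2] [<-].
have hs : (val h).-1 < size (enum U) by rewrite -cardE; case: (val h) h1 h2.
have hin : nth ldef (enum U) (val h).-1 \in U by rewrite -mem_enum mem_nth.
split => //; last by rewrite -lt0n.
apply: val_inj; have [-> _] := aide_ok hin.
by rewrite index_uniq ?enum_uniq // prednK.
Qed.

Definition fl (h : 'I_K) m : option 'I_n := if lab_of h is Some lb then flab lb m else Some p1.

Definition csg q m : SB * {set QA + QB} :=
  match excluded_middle_informative (cond q m) with
  | left H => proj1_sig (constructive_indefinite_description _ H)
  | right _ => (eB x 0 p0, set0)
  end.

Lemma csg_ok q m : cond q m ->
  (q, (csg q m).1, (csg q m).2, q) \in t_delta B /\
  (inl (sA m) \in (csg q m).2 \/ inr (sB m p0) \in (csg q m).2 \/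
   exists i : 'I_n, [/\ val i != 0, mu m <> Some i, sB m i <> q & inr (sB m i) \in (csg q m).2]).
Proof.
move=> hc; rewrite /csg; case: excluded_middle_informative => // H.
by case: (constructive_indefinite_description _ H).
Qed.

Definition exm m : option ('I_K * SB * {set QA + QB}) :=
  if spec is Some q then
    (if (T0 <= m) && pb (cond q m) then Some (aide_of (inl q), (csg q m).1, (csg q m).2) else None)
  else None.

Lemma Hs_lab h lb m : lab_of h = Some lb -> Hs B x fl h m = HL lb m.
Proof. by move=> e; apply: Hgen_ext => k; rewrite /fl e. Qed.

Lemma Hs_nolab h m : lab_of h = None -> Hs B x fl h m = sB m p1.
Proof.
move=> e; elim: m => [|m IH]; first by rewrite /Hs /= (xinit_B xfair).
by rewrite /Hs /= /fl e.
Qed.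

Lemma S_cons h m i : val h != 0 -> fl h m = Some i -> val i != 0 /\ Hs B x fl h m = sB m i.
Proof.
move=> hh; case e: (lab_of h) => [lb|].
- have [hU _ _] := lab_of_some e.
  move=> hf; rewrite (Hs_lab _ e); apply: cons_lab => //; by move: hf; rewrite /fl e.
- move=> hf; rewrite (Hs_nolab _ e); by move: hf; rewrite /fl e => -[<-].
Qed.

Lemma S_cov m (i : 'I_n) : val i != 0 -> mu m <> Some i ->
  exists h : 'I_K, [/\ val h != 0, ~~ moving x fl h m & Hs B x fl h m = sB m i].
Proof.
move=> hi hmu; have [lb [hU hf hH]] := cover_lab hi hmu.
have [hv hl] := aide_ok hU.
exists (aide_of lb); split; first by rewrite hv.
- by rewrite /moving /fl hl hf; case: (Submission.mu x m).
- by rewrite (Hs_lab _ hl).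
Qed.

Lemma S_ex m h sg g : exm m = Some (h, sg, g) ->
  [/\ val h != 0, (Hs B x fl h m, sg, g, Hs B x fl h m) \in t_delta B &
      exists p : proc K, p <> Some h /\ lstate (ystart B n_gt0 x fl m) p \in g].
Proof.
rewrite /exm; case es: spec => [q|] //; case: ifP => // /andP[hT /pbP hc] [eh esg eg].
have [hI _] := Hspec es.
have hU : inl q \in U by rewrite inE HInfV.
have [hv hl] := aide_ok hU.
have hpos : Hs B x fl h m = q.
  by rewrite -eh (Hs_lab _ hl); have [_ ->] := spec_HL es hI; rewrite // (leq_trans (HfT hI) hT).
have [hd hw] := csg_ok hc; rewrite esg eg in hd hw.
split; first by rewrite -eh hv.
- by rewrite hpos.
- case: hw => [hA|[hB|[i [hi hmu hne hin]]]].
  + by exists None.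
  + exists (Some (h0 K_gt0)); split.
    * by move=> [e]; move: hv; rewrite eh -e.
    * by [].
  + have [h' [hh' _ hH']] := S_cov hi hmu.
    exists (Some h'); split.
    * by move=> [e]; apply: hne; rewrite -hH' e hpos.
    * by rewrite /= (negbTE hh') hH'.
Qed.

Lemma S_fair (h : 'I_K) : val h != 0 -> forall m, exists m', m <= m' /\
  (moving x fl h m' \/ exists sg g, exm m' = Some (h, sg, g)).
Proof.
move=> hh m; case e: (lab_of h) => [lb|].
- have [hU ha _] := lab_of_some e.
  have [m' [h1 [[j [hmu hfl]]|[q [es el hT hc]]]]] := lab_fair hU m.
  + exists m'; split => //; left; by rewrite /moving hmu /fl e hfl.
  + exists m'; split => //; right; exists (csg q m').1, (csg q m').2.
    rewrite /exm es hT /=; case: pbP => // _; by rewrite -el ha.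
- have [m' [h1 h2]] := xmoves xfair (Some p1) m.
  by exists m'; split => //; left; rewrite /moving h2 /fl e.
Qed.

Lemma scheme_run : exists y : nat -> config QA QB SA SB K,
  uncond_fair_run A B y /\ forall f, ltl_sat y 0 f <-> ltl_sat x 0 f.
Proof.
exact: (build K_gt0 xfair S_cons S_cov S_ex S_fair).
Qed.

End Scheme.



Definition chs (T : Type) (P : T -> Prop) (H : exists t, P t) : T :=
  proj1_sig (constructive_indefinite_description _ H).
Lemma chsP (T : Type) (P : T -> Prop) (H : exists t, P t) : P (chs H).
Proof. by rewrite /chs; case: constructive_indefinite_description. Qed.

Section Params.
Variables (QA QB SA SB : finType) (A : template QA QB QA SA) (B : template QA QB QB SB).
Variables (n : nat) (n_gt0 : 0 < n).
Variable x : nat -> config QA QB SA SB n.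
Hypothesis xfair : uncond_fair_run A B x.

Local Notation sB := (sB x).
Local Notation mu := (mu x).
Local Notation p0 := (p0 n_gt0).

Definition occb q m : bool := [exists i : 'I_n, (val i != 0) && (sB m i == q)].
Definition V : {set QB} := [set q | pb (exists m, occb q m)].
Definition InfP (i : 'I_n) : {set QB} := [set q | pb (forall m, exists m', m <= m' /\ sB m' i = q)].
Definition Inf : {set QB} := [set q | [exists i : 'I_n, (val i != 0) && (q \in InfP i)]].

Lemma InfPP i q : q \in InfP i -> forall m, exists m', m <= m' /\ sB m' i = q.
Proof. by rewrite inE => /pbP. Qed.

Lemma ex_T1 : exists T1, forall m i, T1 <= m -> sB m i \in InfP i.
Proof.
have H : forall a : 'I_n * QB, exists T, forall m, T <= m -> sB m a.1 = a.2 -> a.2 \in InfP a.1.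
  case=> i q /=; case: (boolP (q \in InfP i)) => hq; first by exists 0.
  have : ~ (forall m, exists m', m <= m' /\ sB m' i = q) by move=> H; move: hq; rewrite inE; case: pbP.
  move/not_all_ex_not => [T HT]; exists T => m hm e; exfalso; apply: HT; by exists m.
have [Tf HTf] := fin_all_exists H.
exists (\max_a Tf a) => m i hm.
apply: (HTf (i, sB m i) m) => //=.
by apply: leq_trans _ hm; apply: (leq_bigmax (i, sB m i)).
Qed.

Definition T1 := chs ex_T1.
Lemma T1P m i : T1 <= m -> sB m i \in InfP i.
Proof. exact: (chsP ex_T1). Qed.

Lemma ex_f q : exists F : nat * 'I_n, q \in V ->
  [/\ val F.2 != 0, sB F.1 F.2 = q & forall m i, val i != 0 -> sB m i = q -> F.1 <= m].
Proof.
case: (boolP (q \in V)) => hV; last by exists (0, p0).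
have ex0 : exists m, occb q m by move: hV; rewrite inE => /pbP.
case: (ex_minnP ex0) => m /existsP[i /andP[hi /eqP e]] hmin.
exists (m, i) => _; split => // m' i' hi' e'.
by apply: hmin; apply/existsP; exists i'; rewrite hi' e' eqxx.
Qed.

Definition f q := (chs (ex_f q)).1.
Definition ifl q := (chs (ex_f q)).2.

Lemma HV m (i : 'I_n) : val i != 0 -> sB m i \in V.
Proof. by move=> hi; rewrite inE; apply/pbP; exists m; apply/existsP; exists i; rewrite hi eqxx. Qed.

Lemma Hf1 q : q \in V -> val (ifl q) != 0 /\ sB (f q) (ifl q) = q.
Proof. by move=> hV; have [] := chsP (ex_f q) hV. Qed.

Lemma Hf2 q m (i : 'I_n) : val i != 0 -> sB m i = q -> f q <= m.
Proof.
move=> hi e; have hV : q \in V by rewrite -e HV.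
by have [_ _ H] := chsP (ex_f q) hV; apply: H hi e.
Qed.

Definition T0 := maxn T1 (\max_(q : QB) f q).

Lemma HfT q : f q <= T0.
Proof. by apply: leq_trans (leq_bigmax q) (leq_maxr _ _). Qed.

Lemma HInfV q : q \in Inf -> q \in V.
Proof.
rewrite inE => /existsP[i /andP[hi hq]].
have [m' [_ e]] := InfPP hq 0; by rewrite -e HV.
Qed.

Lemma occ_lt q m (i : 'I_n) : q \notin Inf -> val i != 0 -> sB m i = q -> m < T1.
Proof.
move=> hI hi e; rewrite ltnNge; apply/negP => hm.
have := T1P i hm; rewrite e => hq.
by move: hI; rewrite inE; case/existsP; exists i; rewrite hi hq.
Qed.

Lemma ex_l q : exists L : nat * 'I_n, q \in V -> q \notin Inf ->
  [/\ f q <= L.1, val L.2 != 0, sB L.1 L.2 = q, mu L.1 = Some L.2 &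
      forall m (i : 'I_n), val i != 0 -> sB m i = q -> m <= L.1].
Proof.
case: (boolP (q \in V)) => hV; last by exists (0, p0).
case: (boolP (q \in Inf)) => hI; first by exists (0, p0).
have ex0 : exists m, occb q m.
  by have [h1 h2] := Hf1 hV; exists (f q); apply/existsP; exists (ifl q); rewrite h1 h2 eqxx.
have ub : forall m, occb q m -> m <= T1.
  by move=> m /existsP[i /andP[hi /eqP e]]; apply: ltnW; apply: occ_lt e.
case: (ex_maxnP ex0 ub) => L /existsP[i /andP[hi /eqP e]] hmax.
have hlast : forall m (i : 'I_n), val i != 0 -> sB m i = q -> m <= L.
  by move=> m j hj ej; apply: hmax; apply/existsP; exists j; rewrite hj ej eqxx.
exists (L, i) => _ _ /=; split => //.
- by have [h1 h2] := Hf1 hV; apply: hlast h2.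
- case: (eqVneq (mu L) (Some i)) => // hne.
  have hne' : mu L <> Some i by apply/eqP.
  have : L.+1 <= L by apply: (hlast L.+1 i hi); rewrite (xs_B xfair hne') e.
  by rewrite ltnn.
Qed.

Definition l q := (chs (ex_l q)).1.
Definition il q := (chs (ex_l q)).2.

Lemma Hl q : q \in V -> q \notin Inf ->
  [/\ f q <= l q, val (il q) != 0, sB (l q) (il q) = q, mu (l q) = Some (il q) &
      forall m (i : 'I_n), val i != 0 -> sB m i = q -> m <= l q].
Proof. exact: (chsP (ex_l q)). Qed.

Lemma ex_lead r : exists i : 'I_n, r \in Inf -> val i != 0 /\ r \in InfP i.
Proof.
case: (boolP (r \in Inf)) => hI; last by exists p0.
by move: (hI); rewrite inE => /existsP[i /andP[hi hr]]; exists i.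
Qed.
Definition leader0 r := chs (ex_lead r).
Lemma leader0P r : r \in Inf -> val (leader0 r) != 0 /\ r \in InfP (leader0 r).
Proof. exact: (chsP (ex_lead r)). Qed.

Lemma U_card (V' Inf' R : {set QB}) rep spec :
  (forall r, r \in Inf' -> rep r == r -> Some r != spec -> r \in R) ->
  #|U V' Inf' rep spec| <= #|V'| + #|R|.
Proof.
move=> HR.
have sub : U V' Inf' rep spec \subset (inl @: V') :|: (inr @: R).
  apply/subsetP => -[q|r]; rewrite !inE => h.
  - by rewrite mem_imset ?h //; exact: inl_inj.
  - case/and3P: h => h1 h2 h3; rewrite orbC mem_imset ?HR //; exact: inr_inj.
apply: leq_trans (subset_leq_card sub) _.
apply: leq_trans (leq_card_setU _ _).1 _.
by rewrite !card_imset //; [exact: inr_inj | exact: inl_inj].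
Qed.

Lemma InfP_Inf (i : 'I_n) q : val i != 0 -> q \in InfP i -> q \in Inf.
Proof. by move=> hi hq; rewrite inE; apply/existsP; exists i; rewrite hi hq. Qed.

Lemma final_run K (K_gt0 : 0 < K) (hK : 2 * #|QB| = K) (p1 : 'I_n) (hp1 : val p1 != 0) :
  exists y : nat -> config QA QB SA SB K,
    uncond_fair_run A B y /\ forall f, ltl_sat y 0 f <-> ltl_sat x 0 f.
Proof.
have cV : #|V| <= #|QB| by apply: max_card.
have cI : #|Inf| <= #|QB| by apply: max_card.
have HfT' : forall q, q \in Inf -> f q <= T0 by move=> q _; apply: HfT.
case: (classic (exists t : 'I_n * QB * QB,
     [/\ val t.1.1 != 0, t.1.2 \in InfP t.1.1, t.2 \in InfP t.1.1 & t.1.2 != t.2])).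
-
  move=> [[[i u] v] [hi hu hv huv]] /=; simpl in *.
  have uI : u \in Inf by apply: InfP_Inf hu.
  have vI : v \in Inf by apply: InfP_Inf hv.
  pose rep q := if q == v then u else q.
  pose lead r := if r == u then i else leader0 r.
  have Hrep : forall q, q \in Inf -> rep q \in Inf /\ rep (rep q) = rep q.
    move=> q hq; rewrite /rep; case: (eqVneq q v) => [_|ne].
      by rewrite uI (negbTE huv).
    by rewrite hq (negbTE ne).
  have Hlead : forall r, r \in Inf -> val (lead r) != 0.
    by move=> r hr; rewrite /lead; case: (eqVneq r u) => _; [exact: hi | case: (leader0P hr)].
  have Hvis : forall q, q \in Inf -> Some q != None ->
      forall m, exists m', m <= m' /\ sB m' (lead (rep q)) = q.
    move=> q hq _; apply: InfPP; rewrite /lead /rep.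
    case: (eqVneq q v) => [e|nv]; first by rewrite eqxx e.
    case: (eqVneq q u) => [e|nu]; first by rewrite e.
    by case: (leader0P hq).
  apply: (@scheme_run _ _ _ _ A B n K n_gt0 K_gt0 x xfair V Inf f l ifl il T0 rep lead None p1
            (@HV) HInfV Hf1 (@Hf2) HfT' Hl Hrep) => //.
  have HR : forall r, r \in Inf -> rep r == r -> Some r != None -> r \in Inf :\ v.
    move=> r hr; rewrite /rep; case: (eqVneq r v) => [e|nv] h _.
      by rewrite e (negbTE huv) in h.
    by rewrite in_setD1 nv hr.
  have hc := @U_card V Inf (Inf :\ v) rep None HR.
  have : #|Inf :\ v| < #|QB| by rewrite (cardsD1 v Inf) vI in cI.
  move=> h; rewrite -hK; apply: leq_ltn_trans hc _.
  by rewrite mul2n -addnn -addnS leq_add.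
- move=> nA.
  have single : forall (j : 'I_n) q1 q2, val j != 0 -> q1 \in InfP j -> q2 \in InfP j -> q1 = q2.
    move=> j q1 q2 hj h1 h2; case: (eqVneq q1 q2) => // ne; exfalso; apply: nA.
    by exists (j, q1, q2); split.
  case: (classic (exists q, q \in InfP p0 /\ q \in Inf)).
  +
    move=> [qs [hq0 hqI]].
    have Hspec : forall q, Some qs = Some q -> q \in Inf /\
        forall m, exists m', [/\ m <= m', T0 <= m' & cond B n_gt0 x q m'].
      move=> q [<-]; split => // m.
      move: (hqI); rewrite inE => /existsP[j /andP[hj hqj]].
      have stay : forall m, T1 <= m -> sB m j = qs.
        move=> m' hm'; apply: (single j) => //; exact: T1P.
      set m0 := maxn m T0.
      have hT1 : T1 <= m0 by apply: leq_trans (leq_maxl _ _) (leq_maxr _ _).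
      have [m1 [h1 e1 _ _]] := next_move xfair j m0.
      have hm1 : T1 <= m1 by apply: leq_trans h1.
      have := xstep xfair m1; rewrite e1 /= => -[g [q' [hd [[p' [hp' hin]] [_ h2]]]]].
      have eq' : q' = qs by rewrite -(stay m1.+1 (leq_trans hm1 (leqnSn _))) /Submission.sB h2 eqxx.
      have hd' : (qs, (ce (x m1)).2 j, g, qs) \in t_delta B.
        change (is_true ((Submission.sB x m1 j, (ce (x m1)).2 j, g, q') \in t_delta B)) in hd.
        by rewrite (stay m1 hm1) eq' in hd.
      have mT : m <= m1 /\ T0 <= m1.
        by split; apply: leq_trans h1; rewrite ?leq_maxl ?leq_maxr.
      case: p' hp' hin => [i'|] hp' hin.
      * case: (boolP (val i' == 0)) => hi'.
        -- have ei : i' = p0 by apply: val_inj; apply/eqP.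
           exists m1; split; try by case: mT.
           exists ((ce (x m1)).2 j, g); split => //; right; left; by rewrite -ei.
        -- case: (eqVneq (sB m1 i') qs) => hs.
           ++ have [m2 [h2' e2]] := InfPP hq0 m1.
              exists m2; split.
              ** by apply: leq_trans h2'; case: mT.
              ** by apply: leq_trans h2'; case: mT.
              ** exists ((ce (x m1)).2 j, g); split => //; right; left.
                 by rewrite /= e2 -hs.
           ++ exists m1; split; try by case: mT.
              exists ((ce (x m1)).2 j, g); split => //; right; right.
              exists i'; split => //; first by rewrite e1 => -[e]; apply: hp'; rewrite e.
              by apply/eqP.
      * exists m1; split; try by case: mT.
        by exists ((ce (x m1)).2 j, g); split => //; left.
    have Hrep : forall q, q \in Inf -> id q \in Inf /\ id (id q) = id q by [].
    have Hlead : forall r, r \in Inf -> val (leader0 r) != 0 by move=> r hr; case: (leader0P hr).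
    have Hvis : forall q, q \in Inf -> Some q != Some qs ->
        forall m, exists m', m <= m' /\ sB m' (leader0 (id q)) = q.
      by move=> q hq _; apply: InfPP; case: (leader0P hq).
    apply: (@scheme_run _ _ _ _ A B n K n_gt0 K_gt0 x xfair V Inf f l ifl il T0 id leader0 (Some qs) p1
              (@HV) HInfV Hf1 (@Hf2) HfT' Hl Hrep) => //.
    have HR : forall r, r \in Inf -> id r == r -> Some r != Some qs -> r \in Inf :\ qs.
      by move=> r hr _ hs; rewrite in_setD1 hr andbT; apply: contra hs => /eqP ->.
    have hc := @U_card V Inf (Inf :\ qs) id (Some qs) HR.
    have : #|Inf :\ qs| < #|QB| by rewrite (cardsD1 qs Inf) hqI in cI.
    move=> h; rewrite -hK; apply: leq_ltn_trans hc _.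
    by rewrite mul2n -addnn -addnS leq_add.
  +
    move=> nB.
    have Hrep : forall q, q \in Inf -> id q \in Inf /\ id (id q) = id q by [].
    have Hlead : forall r, r \in Inf -> val (leader0 r) != 0 by move=> r hr; case: (leader0P hr).
    have Hvis : forall q, q \in Inf -> Some q != None ->
        forall m, exists m', m <= m' /\ sB m' (leader0 (id q)) = q.
      by move=> q hq _; apply: InfPP; case: (leader0P hq).
    apply: (@scheme_run _ _ _ _ A B n K n_gt0 K_gt0 x xfair V Inf f l ifl il T0 id leader0 None p1
              (@HV) HInfV Hf1 (@Hf2) HfT' Hl Hrep) => //.
    have HR : forall r, r \in Inf -> id r == r -> Some r != None -> r \in Inf by [].
    have hc := @U_card V Inf Inf id None HR.
    have q0 : sB T1 p0 \in InfP p0 by apply: T1P.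
    have dis : [disjoint Inf & InfP p0].
      rewrite -setI_eq0; apply/eqP/setP => q; rewrite in_setI in_set0.
      by apply/negP => /andP[h1 h2]; apply: nB; exists q.
    have h2' : #|Inf| + #|InfP p0| <= #|QB|.
      have := leq_card_setU Inf (InfP p0); rewrite dis => -[_ /eqP <-].
      by apply: max_card.
    have h1 : 0 < #|InfP p0| by apply/card_gt0P; exists (sB T1 p0).
    have h3 : #|Inf| < #|QB| by apply: leq_trans h2'; rewrite -addn1 leq_add2l.
    rewrite -hK; apply: leq_ltn_trans hc _.
    by rewrite mul2n -addnn -addnS leq_add.
Qed.

End Params.

Unset Implicit Arguments.
Set Strict Implicit.

Theorem mainTheorem7 (QA QB SA SB : finType)
    (A : template QA QB QA SA) (B : template QA QB QB SB)
    (h : ltlx QA SA QB SB) (n : nat) :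
  2 * #|QB| < n ->
  E_uncond A B n h -> E_uncond A B (2 * #|QB|) h.
Proof.
move=> hn [x [xfair hsat]].
have n_gt0 : 0 < n by apply: leq_ltn_trans hn.
have kpos : 0 < #|QB| by apply/card_gt0P; exists (t_init B).
have K_gt0 : 0 < 2 * #|QB| by rewrite muln_gt0.
have n_gt1 : 1 < n by apply: leq_ltn_trans hn; rewrite mul2n -addnn; apply: leq_trans kpos (leq_addr _ _).
have [y [yfair hy]] := @final_run _ _ _ _ A B n n_gt0 x xfair (2 * #|QB|) K_gt0 erefl
   (Ordinal n_gt1) isT.
by exists y; split => //; rewrite hy.
Qed.
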